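(* Let $\mu,\delta,\rho>0$ and $0<\beta_0<\mu$. For a parameter $b>0$ consider the system \[ \dot P=P\big[(b-\mu)-2bP+(\delta-b)A\big],\qquad \dot A=-(2\delta P+\rho)A \] on $\mathcal F=\{(P,A): P\ge0,\ A\ge0,\ 2P+A\le1\}$, with centrist share $C=1-2P-A$. Let $t_1<\dots<t_n$ be shock times with state components $\Delta_1,\dots,\Delta_n\in[0,1]$ and structural components $\Delta\beta_1,\dots,\Delta\beta_n\ge0$; at $t_k$ the state jumps by $P\mapsto P$, $C\mapsto(1-\Delta_k)C$, $A\mapsto A+\Delta_kC$, and the parameter becomes $B_k=\beta_0+\sum_{j=1}^k\Delta\beta_j$. Assume $P(t_k^+)>0$ for every $k$. Let $C_k^\infty$ denote $\lim_{t\to\infty}C(t)$ for the solution of the system with $b=B_k$ started from the post-shock state at $t_k^+$ (i.e. without further shocks), and let $k^*$ be the first index with $B_{k^*}>\mu$. Then: (i) For all $k<k^*$, $C_k^\infty=1$. If in addition $\delta>B_k$, then the near-centrist surge criterion for the $k$-th shock is $\Delta_k>\Delta_c^{(k)}:=\frac{\mu-B_k}{\delta-B_k}$, in the sense that $\lim_{\varepsilon\to0^+}(\dot P/P)$ at $(P,A)=(\varepsilon,\Delta_k)$ under $b=B_k$ is positive if and only if $\Delta_k>\Delta_c^{(k)}$. (ii) $C_{k^*}^\infty=\mu/B_{k^*}<1$. (iii) For every $k>k^*$, $C_k^\infty=\mu/B_k\le C_{k-1}^\infty$, with strict inequality if and only if $\Delta\beta_k>0$. (iv) $k^*=\min\{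k:\sum_{j=1}^k\Delta\beta_j>\mu-\beta_0\}$.
   Context: Symmetric reduction ($L=R=P$) of a four-group voter model with disengaged share $A$; $b$ is the combined recruitment/reactive-polarisation rate. *)

(* Defs.v *)
From Stdlib Require Import Reals Lra.
From Coquelicot Require Import Coquelicot.
Open Scope R_scope.

Definition fP (mu delta b P A : R) : R :=
  P * ((b - mu) - 2 * b * P + (delta - b) * A).
Definition fA (delta rho P A : R) : R :=
  - (2 * delta * P + rho) * A.

Definition Cshare (P A : R) : R := 1 - 2 * P - A.

Definition inF (P A : R) : Prop := 0 <= P /\ 0 <= A /\ 2 * P + A <= 1.

Fixpoint cumsum (Db : nat -> R) (k : nat) : R :=
  match k with
  | O => 0
  | S k' => cumsum Db k' + Db (S k')
  end.

Definition Bpar (beta0 : R) (Db : nat -> R) (k : nat) : R := beta0 + cumsum Db k.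

(* (P, A) solves the system with parameter b on [t0, +oo):
   differentiable with the right derivatives for t > t0, and right-continuous
   at t0 (so that (P t0, A t0) is the initial/post-shock state). *)
Definition solves (mu delta rho b t0 : R) (P A : R -> R) : Prop :=
  (forall t, t0 < t ->
     is_derive P t (fP mu delta b (P t) (A t)) /\
     is_derive A t (fA delta rho (P t) (A t))) /\
  filterlim P (at_right t0) (locally (P t0)) /\
  filterlim A (at_right t0) (locally (A t0)).

(* Main.v *)
Require Import Defs.
From Stdlib Require Import Reals Lra Lia.
From Coquelicot Require Import Coquelicot.
Open Scope R_scope.

Lemma is_derive_eq (f : R -> R) (x l l' : R) : is_derive f x l -> l = l' -> is_derive f x l'.
Proof. intros H ->; exact H. Qed.

Lemma deriv_cont (f : R -> R) x l : is_derive f x l -> continuous f x.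
Proof. intros H. apply (@ex_derive_continuous R_AbsRing R_NormedModule f x). exists l; exact H. Qed.

Lemma nonincr (f df : R -> R) T :
  (forall t, T <= t -> is_derive f t (df t)) -> (forall t, T <= t -> df t <= 0) ->
  forall x y, T <= x -> x <= y -> f y <= f x.
Proof.
  intros Hd Hn x y Hx Hxy.
  destruct (MVT_gen f x y df) as [c [Hc Heq]].
  - intros z Hz. apply Hd. rewrite Rmin_left in Hz by lra. lra.
  - intros z Hz. apply continuity_pt_filterlim. apply (deriv_cont _ _ (df z)).
    apply Hd. rewrite Rmin_left in Hz by lra. lra.
  - rewrite Rmin_left in Hc by lra. rewrite Rmax_right in Hc by lra.
    assert (df c <= 0) by (apply Hn; lra). nra.
Qed.

Lemma is_derive_prod (f g : R -> R) x df dg :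
  is_derive f x df -> is_derive g x dg -> is_derive (fun t => f t * g t) x (df * g x + f x * dg).
Proof.
  intros H1 H2. exact (is_derive_mult f g x df dg H1 H2 Rmult_comm).
Qed.

Lemma is_derive_expf (f : R -> R) x df :
  is_derive f x df -> is_derive (fun t => exp (f t)) x (df * exp (f x)).
Proof.
  intros H. exact (is_derive_comp exp f x (exp (f x)) df (is_derive_exp (f x)) H).
Qed.

Lemma ball_R (x e y : R) : ball x e y -> Rabs (y - x) < e.
Proof. intro H; exact H. Qed.

Lemma R_ball (x e y : R) : Rabs (y - x) < e -> ball x e y.
Proof. intro H; exact H. Qed.

Lemma const_on (f df : R -> R) T :
  (forall t, T <= t -> is_derive f t (df t)) -> (forall t, T <= t -> df t = 0) ->
  forall t, T <= t -> f t = f T.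
Proof.
  intros Hd H0 t Ht.
  assert (f t <= f T).
  { apply (nonincr f df T Hd); [intros s Hs; rewrite H0 by lra; lra| lra| lra]. }
  assert (- f t <= - f T).
  { apply (nonincr (fun s => - f s) (fun s => - df s) T).
    - intros s Hs. apply (is_derive_eq _ _ (opp (df s))).
      apply (is_derive_opp f s (df s)). now apply Hd. reflexivity.
    - intros s Hs; rewrite H0 by lra; lra.
    - lra. - lra. }
  lra.
Qed.

Lemma pos_lin (f g : R -> R) t0 T : t0 < T ->
  (forall t, t0 < t -> is_derive f t (f t * g t)) ->
  (forall t, t0 < t -> continuous g t) -> 0 < f T -> forall t, T <= t -> 0 < f t.
Proof.
  intros HT Hf Hg HfT.
  set (G := fun s => RInt g T s).
  assert (HG : forall t, t0 < t -> is_derive G t (g t)).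
  { intros t Ht. apply (is_derive_RInt g G T t).
    - assert (Hr : 0 < (t - t0) / 2) by lra.
      exists (mkposreal _ Hr). intros s Hs. apply ball_R in Hs. simpl in Hs.
      apply (@RInt_correct R_CompleteNormedModule). apply (@ex_RInt_continuous R_CompleteNormedModule). intros z Hz. apply Hg.
      assert (t0 < Rmin T s).
      { apply Rmin_glb_lt; [lra|]. apply Rabs_def2 in Hs. lra. }
      lra.
    - apply Hg; lra. }
  set (Q := fun s => f s * exp (- G s)).
  assert (HQ : forall t, T <= t -> Q t = Q T).
  { apply (const_on Q (fun s => f s * g s * exp (- G s) + f s * ((- g s) * exp (- G s)))).
    - intros t Ht. unfold Q.
      apply (is_derive_prod f (fun s => exp (- G s))). apply Hf; lra.
      eapply is_derive_eq. apply (is_derive_expf (fun s => - G s)).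
      apply (is_derive_eq _ _ (opp (g t))). apply (@is_derive_opp R_AbsRing R_NormedModule G t (g t)). apply HG; lra. reflexivity.
      reflexivity.
    - intros t Ht. ring. }
  intros t Ht. specialize (HQ t Ht). unfold Q, G in HQ.
  rewrite RInt_point in HQ. change (zero : R) with 0 in HQ.
  rewrite Ropp_0, exp_0, Rmult_1_r in HQ.
  pose proof (exp_pos (- RInt g T t)).
  destruct (Rlt_or_le 0 (f t)) as [h|h]; [exact h|]. nra.
Qed.
Lemma cont_lin (P A : R -> R) c1 c2 c3 t : continuous P t -> continuous A t ->
  continuous (fun s => c1 + c2 * P s + c3 * A s) t.
Proof.
  intros HP HA.
  apply (@continuous_plus R_UniformSpace R_AbsRing R_NormedModule (fun s => c1 + c2 * P s) (fun s => c3 * A s)).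
  apply (@continuous_plus R_UniformSpace R_AbsRing R_NormedModule (fun s => c1) (fun s => c2 * P s)).
  apply continuous_const.
  apply (@continuous_mult R_UniformSpace R_AbsRing (fun s => c2) P). apply continuous_const. exact HP.
  apply (@continuous_mult R_UniformSpace R_AbsRing (fun s => c3) A). apply continuous_const. exact HA.
Qed.

Lemma gronwall (V dV : R -> R) T k K : 0 < k ->
  (forall t, T <= t -> is_derive V t (dV t)) ->
  (forall t, T <= t -> dV t <= - k * V t + K) ->
  forall t, T <= t -> V t <= K / k + (V T - K / k) * exp (- k * (t - T)).
Proof.
  intros Hk Hd Hle t Ht.
  set (Y := fun s => (V s - K / k) * exp (k * s)).
  assert (HY : Y t <= Y T).
  { apply (nonincr Y (fun s => dV s * exp (k * s) + (V s - K / k) * (k * exp (k * s))) T).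
    - intros s Hs. unfold Y.
      apply (is_derive_prod (fun s => V s - K / k) (fun s => exp (k * s))).
      + apply (is_derive_eq _ _ (minus (dV s) zero)).
        apply (@is_derive_minus R_AbsRing R_NormedModule V (fun _ => K / k)). now apply Hd.
        apply (@is_derive_const R_AbsRing R_NormedModule). unfold minus, plus, opp, zero; simpl; ring.
      + apply (is_derive_eq _ _ ((k * 1) * exp (k * s))).
        apply (is_derive_expf (fun s => k * s) s (k * 1)).
        apply (is_derive_scal (fun s => s) s k 1). apply (is_derive_id s).
        rewrite Rmult_1_r; reflexivity.
    - intros s Hs. pose proof (Hle s Hs). pose proof (exp_pos (k * s)).
      assert (dV s * exp (k * s) + (V s - K / k) * (k * exp (k * s))
              = exp (k * s) * (dV s + k * V s - K)) by (field; lra).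
      rewrite H1. assert (dV s + k * V s - K <= 0) by lra. nra.
    - lra. - exact Ht. }
  unfold Y in HY.
  assert (He : exp (k * T) = exp (k * t) * exp (- k * (t - T))).
  { rewrite <- exp_plus. f_equal. ring. }
  rewrite He in HY. pose proof (exp_pos (k * t)).
  assert (V t - K / k <= (V T - K / k) * exp (- k * (t - T))).
  { apply (Rmult_le_reg_r (exp (k * t))); [lra|]. nra. }
  lra.
Qed.

Lemma growth (z dz : R -> R) T c :
  (forall t, T <= t -> is_derive z t (dz t)) -> (forall t, T <= t -> c <= dz t) ->
  forall t, T <= t -> z T + c * (t - T) <= z t.
Proof.
  intros Hd Hc t Ht.
  assert (c * t - z t <= c * T - z T).
  { apply (nonincr (fun s => c * s - z s) (fun s => c - dz s) T).
    - intros s Hs. apply (is_derive_eq _ _ (minus (c * 1) (dz s))).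
      apply (@is_derive_minus R_AbsRing R_NormedModule (fun s => c * s) z).
      apply (is_derive_scal (fun s => s) s c 1). apply (is_derive_id s).
      now apply Hd. unfold minus, plus, opp; simpl; ring.
    - intros s Hs; specialize (Hc s Hs); lra.
    - lra. - exact Ht. }
  lra.
Qed.

Lemma exp_small c T eps : 0 < c -> 0 < eps ->
  exists M, forall t, M < t -> exp (- c * (t - T)) < eps.
Proof.
  intros Hc He. exists (T + Rabs (ln eps) / c). intros t Ht.
  assert (H1 : Rabs (ln eps) < c * (t - T)).
  { assert (Rabs (ln eps) / c < t - T) by lra.
    apply (Rmult_lt_compat_l c) in H; [|lra].
    replace (c * (Rabs (ln eps) / c)) with (Rabs (ln eps)) in H by (field; lra). exact H. }
  pose proof (Rle_abs (- ln eps)). rewrite Rabs_Ropp in H.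
  rewrite <- (exp_ln eps) by exact He. apply exp_increasing. lra.
Qed.

Lemma seg_basic mu delta rho b t0 P A :
  0 < delta -> 0 < rho ->
  solves mu delta rho b t0 P A -> 0 < P t0 ->
  exists T1, t0 < T1 /\
   (forall t, T1 <= t -> is_derive P t (fP mu delta b (P t) (A t)) /\
                         is_derive A t (fA delta rho (P t) (A t))) /\
   (forall t, T1 <= t -> 0 < P t) /\
   (forall t, T1 <= t -> A t * A t <= A T1 * A T1 * exp (- (2 * rho) * (t - T1))) /\
   (forall t, T1 <= t -> Rabs (A t) <= Rabs (A T1) * exp (- rho * (t - T1))).
Proof.
  intros Hd Hr [HD [HPc _]] HP0.
  assert (Hh : 0 < P t0 / 2) by lra.
  destruct (proj1 (filterlim_locally P (P t0)) HPc (mkposreal _ Hh)) as [d Hdd].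
  set (T1 := t0 + d / 2).
  assert (HT1 : t0 < T1) by (unfold T1; destruct d; simpl; lra).
  assert (HPT1 : 0 < P T1).
  { assert (Hb : ball t0 d T1).
    { apply R_ball. unfold T1. destruct d as [d dp]; simpl.
      replace (t0 + d / 2 - t0) with (d / 2) by ring. rewrite Rabs_pos_eq; lra. }
    specialize (Hdd T1 Hb HT1). apply ball_R in Hdd. simpl in Hdd.
    apply Rabs_def2 in Hdd. lra. }
  exists T1. split; [exact HT1|].
  assert (HDT : forall t, T1 <= t -> is_derive P t (fP mu delta b (P t) (A t)) /\
                         is_derive A t (fA delta rho (P t) (A t))).
  { intros t Ht; apply HD; lra. }
  split; [exact HDT|].
  assert (Hpos : forall t, T1 <= t -> 0 < P t).
  { apply (pos_lin P (fun s => (b - mu) + (- 2 * b) * P s + (delta - b) * A s) t0 T1 HT1).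
    - intros t Ht. apply (is_derive_eq _ _ (fP mu delta b (P t) (A t))).
      apply HD; lra. unfold fP; ring.
    - intros t Ht. apply cont_lin.
      + apply (deriv_cont _ _ _ (proj1 (HD t Ht))).
      + apply (deriv_cont _ _ _ (proj2 (HD t Ht))).
    - exact HPT1. }
  split; [exact Hpos|].
  assert (HW : forall t, T1 <= t ->
     A t * A t * exp ((2 * rho) * t) <= A T1 * A T1 * exp ((2 * rho) * T1)).
  { intros t Ht.
    apply (nonincr (fun s => A s * A s * exp ((2 * rho) * s))
       (fun s => (fA delta rho (P s) (A s) * A s + A s * fA delta rho (P s) (A s)) * exp ((2 * rho) * s)
                 + A s * A s * ((2 * rho * 1) * exp ((2 * rho) * s))) T1).
    - intros s Hs.
      apply (is_derive_prod (fun s => A s * A s) (fun s => exp ((2 * rho) * s))).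
      + apply (is_derive_prod A A); apply HDT; lra.
      + apply (is_derive_expf (fun s => (2 * rho) * s) s (2 * rho * 1)).
        apply (is_derive_scal (fun s => s) s (2 * rho) 1). apply (is_derive_id s).
    - intros s Hs. unfold fA. pose proof (Hpos s Hs). pose proof (exp_pos ((2 * rho) * s)).
      assert (E : (- (2 * delta * P s + rho) * A s * A s + A s * (- (2 * delta * P s + rho) * A s)) *
                  exp (2 * rho * s) + A s * A s * (2 * rho * 1 * exp (2 * rho * s))
                 = - (4 * delta * P s * (A s * A s)) * exp (2 * rho * s)) by ring.
      rewrite E. assert (0 <= A s * A s) by nra.
      assert (0 <= 4 * delta * P s * (A s * A s)).
      { apply Rmult_le_pos; [|lra]. nra. }
      nra.
    - lra. - exact Ht. }
  assert (HA2 : forall t, T1 <= t -> A t * A t <= A T1 * A T1 * exp (- (2 * rho) * (t - T1))).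
  { intros t Ht. specialize (HW t Ht).
    assert (He : exp ((2 * rho) * T1) = exp ((2 * rho) * t) * exp (- (2 * rho) * (t - T1))).
    { rewrite <- exp_plus. f_equal. ring. }
    rewrite He in HW. pose proof (exp_pos ((2 * rho) * t)).
    apply (Rmult_le_reg_r (exp ((2 * rho) * t))); [lra|]. nra. }
  split; [exact HA2|].
  intros t Ht. specialize (HA2 t Ht).
  assert (He : exp (- (2 * rho) * (t - T1)) = exp (- rho * (t - T1)) * exp (- rho * (t - T1))).
  { rewrite <- exp_plus. f_equal. ring. }
  rewrite He in HA2. pose proof (exp_pos (- rho * (t - T1))).
  set (y := Rabs (A T1) * exp (- rho * (t - T1))) in *.
  assert (Hy : A T1 * A T1 * (exp (- rho * (t - T1)) * exp (- rho * (t - T1))) = y * y).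
  { unfold y. rewrite <- (Rabs_pos_eq (A T1 * A T1)) by nra. rewrite Rabs_mult. ring. }
  rewrite Hy in HA2.
  assert (0 <= y) by (unfold y; pose proof (Rabs_pos (A T1)); nra).
  destruct (Rcase_abs (A t)) as [h|h]; [rewrite Rabs_left by lra | rewrite Rabs_right by lra]; nra.
Qed.

Lemma exp_mono x y : x <= y -> exp x <= exp y.
Proof. intros H. destruct (Rle_lt_or_eq_dec x y H) as [h|h]. left; now apply exp_increasing. subst; lra. Qed.

Lemma abs_bound_mul (c a Ka e : R) : Rabs a <= Ka * e -> Rabs (c * a) <= Rabs c * Ka * e.
Proof. intros H. rewrite Rabs_mult. pose proof (Rabs_pos c). rewrite Rmult_assoc. now apply Rmult_le_compat_l. Qed.

Lemma seg_le mu delta rho b P A T1 :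
  0 < rho -> 0 < b -> b <= mu ->
  (forall t, T1 <= t -> is_derive P t (fP mu delta b (P t) (A t))) ->
  (forall t, T1 <= t -> 0 < P t) ->
  (forall t, T1 <= t -> Rabs (A t) <= Rabs (A T1) * exp (- rho * (t - T1))) ->
  is_lim (fun t => Cshare (P t) (A t)) p_infty 1.
Proof.
  intros Hr Hb Hbm HD Hpos HA.
  set (Ka := Rabs (A T1)). set (K := Rabs (delta - b) * Ka).
  assert (HK : 0 <= K) by (unfold K, Ka; pose proof (Rabs_pos (delta - b)); pose proof (Rabs_pos (A T1)); nra).
  set (h := fun s => - (K / rho) * exp (- rho * (s - T1))).
  assert (Hh : forall s, is_derive h s (K * exp (- rho * (s - T1)))).
  { intros s. unfold h. auto_derive. auto. unfold Rminus. field. lra. }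
  assert (Hu : forall s, T1 <= s -> is_derive (fun s => / P s) s (- fP mu delta b (P s) (A s) / P s ^ 2)).
  { intros s Hs. apply (is_derive_inv P s). now apply HD. specialize (Hpos s Hs); lra. }
  set (z := fun s => / P s * exp (h s)).
  set (c := 2 * b * exp (- (K / rho))).
  assert (Hc : 0 < c) by (unfold c; pose proof (exp_pos (- (K / rho))); nra).
  assert (Hg : forall t, T1 <= t -> z T1 + c * (t - T1) <= z t).
  { apply (growth z (fun s => (- fP mu delta b (P s) (A s) / P s ^ 2) * exp (h s)
                               + / P s * (K * exp (- rho * (s - T1)) * exp (h s)))).
    - intros s Hs. unfold z.
      apply (is_derive_prod (fun s => / P s) (fun s => exp (h s))).
      + now apply Hu.
      + apply (is_derive_expf h). apply Hh.
    - intros s Hs. pose proof (Hpos s Hs) as Hp.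
      set (e := exp (- rho * (s - T1))).
      assert (He1 : e <= 1) by (unfold e; rewrite <- exp_0; apply exp_mono; nra).
      assert (He0 : 0 < e) by apply exp_pos.
      assert (HE : exp (- (K / rho)) <= exp (h s)).
      { apply exp_mono. unfold h; fold e.
        assert (0 <= K / rho) by (apply Rdiv_le_0_compat; lra). nra. }
      assert (Hid : - fP mu delta b (P s) (A s) / P s ^ 2 * exp (h s) + / P s * (K * e * exp (h s))
                    = exp (h s) * (2 * b + (- (b - mu) - (delta - b) * A s + K * e) / P s)).
      { unfold fP. field. lra. }
      rewrite Hid.
      assert (Hab : Rabs ((delta - b) * A s) <= K * e).
      { unfold K. apply abs_bound_mul. apply HA; lra. }
      pose proof (Rle_abs ((delta - b) * A s)).
      assert (0 <= (- (b - mu) - (delta - b) * A s + K * e) / P s).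
      { apply Rdiv_le_0_compat; lra. }
      unfold c. pose proof (exp_pos (- (K / rho))). nra. }
  assert (Hz0 : 0 < z T1) by (unfold z; pose proof (Hpos T1 (Rle_refl _)); pose proof (exp_pos (h T1));
                              apply Rmult_lt_0_compat; [apply Rinv_0_lt_compat|]; lra).
  assert (Hub : forall t, T1 <= t -> c * (t - T1) <= / P t).
  { intros t Ht. specialize (Hg t Ht).
    assert (Hht : h t <= 0).
    { unfold h. pose proof (exp_pos (- rho * (t - T1))).
      assert (0 <= K / rho) by (apply Rdiv_le_0_compat; lra). nra. }
    assert (Hzt : z t <= / P t).
    { unfold z. pose proof (Hpos t Ht). assert (0 < / P t) by (apply Rinv_0_lt_compat; lra).
      assert (exp (h t) <= 1) by (rewrite <- exp_0; now apply exp_mono).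
      pose proof (exp_pos (h t)). nra. }
    lra. }
  apply is_lim_spec. intros eps. simpl.
  destruct eps as [eps Heps]; simpl.
  assert (Hq : 0 < eps / 2 / (Ka + 1)).
  { unfold Ka; pose proof (Rabs_pos (A T1)). apply Rdiv_lt_0_compat; lra. }
  destruct (exp_small rho T1 _ Hr Hq) as [M1 HM1].
  exists (Rmax T1 (Rmax M1 (T1 + 8 / (eps * c)))). intros t Ht.
  apply Rmax_Rlt in Ht. destruct Ht as [Ht1 Ht]. apply Rmax_Rlt in Ht. destruct Ht as [Ht2 Ht3].
  assert (HAt : Rabs (A t) < eps / 2).
  { specialize (HA t ltac:(lra)). specialize (HM1 t Ht2). fold Ka in HA.
    assert (HKa : 0 <= Ka) by apply Rabs_pos.
    assert (Ka * exp (- rho * (t - T1)) <= Ka * (eps / 2 / (Ka + 1))).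
    { apply Rmult_le_compat_l; lra. }
    assert (Ka * (eps / 2 / (Ka + 1)) < eps / 2).
    { apply (Rmult_lt_reg_r (Ka + 1)); [lra|]. field_simplify; lra. }
    lra. }
  assert (HPt : P t < eps / 8).
  { specialize (Hub t ltac:(lra)). pose proof (Hpos t ltac:(lra)).
    assert (8 / eps < c * (t - T1)).
    { assert (8 / (eps * c) < t - T1) by lra.
      apply (Rmult_lt_compat_l c) in H0; [|lra].
      replace (c * (8 / (eps * c))) with (8 / eps) in H0 by (field; lra). exact H0. }
    assert (8 / eps < / P t) by lra.
    assert (Hinv : P t * / P t = 1) by (field; lra).
    apply (Rmult_lt_reg_r (8 / eps)). apply Rdiv_lt_0_compat; lra.
    replace (eps / 8 * (8 / eps)) with 1 by (field; lra). nra. }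
  pose proof (Hpos t ltac:(lra)).
  unfold Cshare. replace (1 - 2 * P t - A t - 1) with (- (2 * P t + A t)) by ring.
  rewrite Rabs_Ropp. eapply Rle_lt_trans. apply Rabs_triang.
  rewrite Rabs_pos_eq by lra. lra.
Qed.

Lemma sq_lt_abs (x g : R) : 0 < g -> x * x < g * g -> - g < x < g.
Proof. intros Hg H. split; nra. Qed.

Lemma seg_gt mu delta rho b P A T1 :
  0 < mu -> 0 < rho -> mu < b ->
  (forall t, T1 <= t -> is_derive P t (fP mu delta b (P t) (A t))) ->
  (forall t, T1 <= t -> 0 < P t) ->
  (forall t, T1 <= t -> A t * A t <= A T1 * A T1 * exp (- (2 * rho) * (t - T1))) ->
  (forall t, T1 <= t -> Rabs (A t) <= Rabs (A T1) * exp (- rho * (t - T1))) ->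
  is_lim (fun t => Cshare (P t) (A t)) p_infty (mu / b).
Proof.
  intros Hmu Hr Hbm HD Hpos HA2 HA.
  set (m := b - mu). assert (Hm : 0 < m) by (unfold m; lra).
  set (us := 2 * b / m). assert (Hus : 0 < us) by (unfold us; apply Rdiv_lt_0_compat; lra).
  set (al := m / 2). assert (Hal : 0 < al) by (unfold al; lra).
  set (w := fun s => / P s - us).
  set (du := fun s => - fP mu delta b (P s) (A s) / P s ^ 2).
  assert (Hdw : forall s, T1 <= s -> is_derive w s (du s)).
  { intros s Hs. unfold w, du.
    apply (is_derive_eq _ _ (minus (- fP mu delta b (P s) (A s) / P s ^ 2) zero)).
    apply (@is_derive_minus R_AbsRing R_NormedModule (fun s => / P s) (fun _ => us)).
    apply (is_derive_inv P s). now apply HD. specialize (Hpos s Hs); lra.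
    apply (@is_derive_const R_AbsRing R_NormedModule).
    unfold minus, plus, opp, zero; simpl; ring. }
  assert (Hduw : forall s, T1 <= s ->
     du s = - (m + (delta - b) * A s) * w s - us * (delta - b) * A s).
  { intros s Hs. pose proof (Hpos s Hs). unfold du, w, us, m, fP. field. lra. }
  set (V := fun s => w s * w s).
  assert (HV : forall eps, 0 < eps -> exists M, forall t, M < t -> V t < eps).
  { intros eps Heps.
    set (D := (delta - b) * (delta - b) + 1).
    assert (HD0 : 0 < D) by (unfold D; pose proof (Rle_0_sqr (delta - b)); unfold Rsqr in *; lra).
    set (eta := Rmin (m * m / (4 * D)) (al * al * eps / (2 * us * us * D))).
    assert (Heta : 0 < eta).
    { unfold eta. apply Rmin_glb_lt; apply Rdiv_lt_0_compat.
      - apply Rmult_lt_0_compat; lra.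
      - lra.
      - apply Rmult_lt_0_compat; [apply Rmult_lt_0_compat|]; lra.
      - apply Rmult_lt_0_compat; [apply Rmult_lt_0_compat; [apply Rmult_lt_0_compat|]|]; lra. }
    assert (Hq : 0 < eta / (A T1 * A T1 + 1)) by (apply Rdiv_lt_0_compat; nra).
    assert (H2r : 0 < 2 * rho) by lra.
    destruct (exp_small (2 * rho) T1 _ H2r Hq) as [M0 HM0].
    set (T3 := Rmax T1 (M0 + 1)).
    assert (HT3 : T1 <= T3) by apply Rmax_l.
    assert (HsmA : forall t, T3 <= t -> A t * A t <= eta).
    { intros t Ht. assert (M0 < t) by (pose proof (Rmax_r T1 (M0 + 1)); fold T3 in H; lra).
      specialize (HM0 t H). specialize (HA2 t ltac:(lra)).
      assert (0 <= A T1 * A T1) by nra.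
      assert (A T1 * A T1 * exp (- (2 * rho) * (t - T1)) <= A T1 * A T1 * (eta / (A T1 * A T1 + 1))).
      { apply Rmult_le_compat_l; lra. }
      assert (A T1 * A T1 * (eta / (A T1 * A T1 + 1)) <= eta).
      { apply (Rmult_le_reg_r (A T1 * A T1 + 1)); [lra|]. field_simplify; nra. }
      lra. }
    assert (HdV : forall t, T3 <= t -> is_derive V t (du t * w t + w t * du t)).
    { intros t Ht. unfold V. apply (is_derive_prod w w); apply Hdw; lra. }
    assert (HdVle : forall t, T3 <= t -> du t * w t + w t * du t <= - al * V t + al * eps / 2).
    { intros t Ht. rewrite Hduw by lra. unfold V.
      specialize (HsmA t Ht).
      set (x := (delta - b) * A t). set (E := us * (delta - b) * A t). set (ww := w t).
      assert (Hx2 : x * x <= D * eta).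
      { unfold x, D. assert (0 <= A t * A t) by nra.
        replace ((delta - b) * A t * ((delta - b) * A t)) with ((delta - b) * (delta - b) * (A t * A t)) by ring.
        assert ((delta - b) * (delta - b) * (A t * A t) <= ((delta - b) * (delta - b) + 1) * (A t * A t)) by nra.
        assert (((delta - b) * (delta - b) + 1) * (A t * A t) <= ((delta - b) * (delta - b) + 1) * eta).
        { apply Rmult_le_compat_l; [pose proof (Rle_0_sqr (delta - b)); unfold Rsqr in *; lra | exact HsmA]. }
        lra. }
      assert (Hde1 : D * eta <= m * m / 4).
      { assert (eta <= m * m / (4 * D)) by apply Rmin_l.
        apply (Rmult_le_compat_l D) in H; [|lra].
        replace (D * (m * m / (4 * D))) with (m * m / 4) in H by (field; lra). exact H. }
      assert (Hde2 : us * us * (D * eta) <= al * al * eps / 2).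
      { assert (eta <= al * al * eps / (2 * us * us * D)) by apply Rmin_r.
        apply (Rmult_le_compat_l (us * us * D)) in H; [|nra].
        replace (us * us * D * (al * al * eps / (2 * us * us * D))) with (al * al * eps / 2) in H
          by (field; lra). nra. }
      assert (Hxm : - (m / 2) <= x) by nra.
      assert (HE2 : E * E <= al * al * eps / 2).
      { unfold E. replace (us * (delta - b) * A t * (us * (delta - b) * A t)) with (us * us * (x * x))
          by (unfold x; ring).
        assert (us * us * (x * x) <= us * us * (D * eta)) by (apply Rmult_le_compat_l; nra). lra. }
      fold x. fold E. fold ww.
      assert (Hw2 : 0 <= ww * ww) by nra.
      assert (H1 : - (m + x) * ww * ww <= - al * (ww * ww)).
      { unfold al. nra. }
      assert (H2 : - 2 * ww * E <= al * (ww * ww) + E * E / al).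
      { assert (0 <= (al * ww + E) * (al * ww + E)) by (pose proof (Rle_0_sqr (al * ww + E)); unfold Rsqr in *; lra).
        assert (al * (ww * ww) + E * E / al + 2 * ww * E = (al * ww + E) * (al * ww + E) / al)
          by (field; lra).
        assert (0 <= al * (ww * ww) + E * E / al + 2 * ww * E).
        { rewrite H0. apply Rdiv_le_0_compat; lra. }
        lra. }
      assert (H3 : E * E / al <= al * eps / 2).
      { apply (Rmult_le_reg_r al); [lra|]. replace (E * E / al * al) with (E * E) by (field; lra). nra. }
      replace ((- (m + x) * ww - E) * ww + ww * (- (m + x) * ww - E))
        with (2 * (- (m + x) * ww * ww) - 2 * ww * E) by ring.
      nra. }
    pose proof (gronwall V (fun t => du t * w t + w t * du t) T3 al (al * eps / 2) Hal HdV HdVle) as Hgr.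
    assert (Hq2 : 0 < eps / 2 / (Rabs (V T3 - al * eps / 2 / al) + 1)).
    { pose proof (Rabs_pos (V T3 - al * eps / 2 / al)). apply Rdiv_lt_0_compat; lra. }
    destruct (exp_small al T3 _ Hal Hq2) as [M4 HM4].
    exists (Rmax T3 M4). intros t Ht. apply Rmax_Rlt in Ht. destruct Ht as [Ht1 Ht2].
    specialize (Hgr t ltac:(lra)). specialize (HM4 t Ht2).
    replace (al * eps / 2 / al) with (eps / 2) in * by (field; lra).
    set (q := V T3 - eps / 2) in *.
    pose proof (Rle_abs q). pose proof (Rabs_pos q). pose proof (exp_pos (- al * (t - T3))).
    assert (Rabs q * exp (- al * (t - T3)) <= Rabs q * (eps / 2 / (Rabs q + 1))).
    { apply Rmult_le_compat_l; lra. }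
    assert (Rabs q * (eps / 2 / (Rabs q + 1)) < eps / 2).
    { apply (Rmult_lt_reg_r (Rabs q + 1)); [lra|]. field_simplify; lra. }
    assert (q * exp (- al * (t - T3)) <= Rabs q * exp (- al * (t - T3))) by nra.
    lra. }
  apply is_lim_spec. intros eps. simpl.
  destruct eps as [eps Heps]; simpl.
  set (g := Rmin (eps * us * us / 8) (us / 2)).
  assert (Hg : 0 < g).
  { unfold g. apply Rmin_glb_lt; [apply Rdiv_lt_0_compat; [apply Rmult_lt_0_compat; [apply Rmult_lt_0_compat|]; lra|lra] | lra]. }
  destruct (HV (g * g) (Rmult_lt_0_compat _ _ Hg Hg)) as [M5 HM5].
  set (Ka := Rabs (A T1)).
  assert (Hq : 0 < eps / 2 / (Ka + 1)).
  { unfold Ka; pose proof (Rabs_pos (A T1)). apply Rdiv_lt_0_compat; lra. }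
  destruct (exp_small rho T1 _ Hr Hq) as [M6 HM6].
  exists (Rmax T1 (Rmax M5 M6)). intros t Ht.
  apply Rmax_Rlt in Ht. destruct Ht as [Ht1 Ht]. apply Rmax_Rlt in Ht. destruct Ht as [Ht2 Ht3].
  assert (HAt : Rabs (A t) < eps / 2).
  { specialize (HA t ltac:(lra)). specialize (HM6 t Ht3). fold Ka in HA.
    assert (HKa : 0 <= Ka) by apply Rabs_pos.
    assert (Ka * exp (- rho * (t - T1)) <= Ka * (eps / 2 / (Ka + 1))).
    { apply Rmult_le_compat_l; lra. }
    assert (Ka * (eps / 2 / (Ka + 1)) < eps / 2).
    { apply (Rmult_lt_reg_r (Ka + 1)); [lra|]. field_simplify; lra. }
    lra. }
  specialize (HM5 t Ht2). unfold V in HM5.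
  destruct (sq_lt_abs (w t) g Hg HM5) as [Hw1 Hw2].
  pose proof (Hpos t ltac:(lra)) as Hp.
  assert (Hg1 : g <= eps * us * us / 8) by apply Rmin_l.
  assert (Hg2 : g <= us / 2) by apply Rmin_r.
  set (uu := / P t).
  assert (Huu : uu = us + w t) by (unfold w, uu; ring).
  assert (Huu2 : us / 2 <= uu) by lra.
  set (qq := us * uu).
  assert (Hqq : us * us / 2 <= qq) by (unfold qq; nra).
  set (X := 2 * w t / qq).
  assert (HX : X * qq = 2 * w t) by (unfold X; field; nra).
  assert (Hid : Cshare (P t) (A t) - mu / b = X - A t).
  { unfold X, qq, uu, Cshare. unfold w in *. unfold us, m. field. split; [lra|]. split; [lra|]. lra. }
  rewrite Hid.
  assert (HXb : - (eps / 2) < X < eps / 2).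
  { split; nra. }
  eapply Rle_lt_trans. apply Rabs_triang. rewrite Rabs_Ropp.
  assert (Rabs X < eps / 2) by (apply Rabs_def1; lra). lra.
Qed.

Lemma seg mu delta rho b t0 P A :
  0 < mu -> 0 < delta -> 0 < rho -> 0 < b ->
  solves mu delta rho b t0 P A -> 0 < P t0 ->
  (b <= mu -> is_lim (fun t => Cshare (P t) (A t)) p_infty 1) /\
  (mu < b -> is_lim (fun t => Cshare (P t) (A t)) p_infty (mu / b)).
Proof.
  intros Hmu Hd Hr Hb Hs HP0.
  destruct (seg_basic mu delta rho b t0 P A Hd Hr Hs HP0) as [T1 [_ [HD [Hpos [HA2 HA]]]]].
  split.
  - intros Hbm. apply (seg_le mu delta rho b P A T1 Hr Hb Hbm); auto. intros t Ht; apply HD; auto.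
  - intros Hbm. apply (seg_gt mu delta rho b P A T1 Hmu Hr Hbm); auto. intros t Ht; apply HD; auto.
Qed.

Lemma cumsum_mono (Db : nat -> R) n :
  (forall k, (1 <= k <= n)%nat -> 0 <= Db k) ->
  forall i j, (i <= j)%nat -> (j <= n)%nat -> cumsum Db i <= cumsum Db j.
Proof.
  intros HDb i j Hij. induction Hij as [|j Hij IH]; intros Hj.
  - lra.
  - simpl. assert (0 <= Db (S j)) by (apply HDb; lia). specialize (IH ltac:(lia)). lra.
Qed.

Lemma div_cmp mu Y d : 0 < mu -> 0 < Y -> 0 <= d ->
  mu / (Y + d) <= mu / Y /\ (mu / (Y + d) < mu / Y <-> 0 < d).
Proof.
  intros Hm HY Hd.
  assert (E : mu / Y - mu / (Y + d) = mu * d / (Y * (Y + d))) by (field; lra).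
  assert (HP : 0 < Y * (Y + d)) by nra.
  assert (0 <= mu * d / (Y * (Y + d))) by (apply Rdiv_le_0_compat; nra).
  split; [lra|]. split; intro H1.
  - destruct (Rle_lt_or_eq_dec 0 d Hd) as [h|h]; [exact h|]. subst d.
    rewrite Rmult_0_r in E. unfold Rdiv in E. rewrite Rmult_0_l in E. lra.
  - assert (0 < mu * d / (Y * (Y + d))) by (apply Rdiv_lt_0_compat; nra). lra.
Qed.
Theorem theorem7p12
  (mu delta rho beta0 : R) (n : nat)
  (tt Dl Db : nat -> R) (P0 A0 : R) (Ps As : nat -> R -> R)
  (Hmu : 0 < mu) (Hdelta : 0 < delta) (Hrho : 0 < rho)
  (Hbeta0 : 0 < beta0) (Hbeta0mu : beta0 < mu)
  (Htt : forall k, (k < n)%nat -> tt k < tt (S k))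
  (HDl : forall k, (1 <= k <= n)%nat -> 0 <= Dl k <= 1)
  (HDb : forall k, (1 <= k <= n)%nat -> 0 <= Db k)
  (HF0 : inF P0 A0)
  (Hinit : Ps 0%nat (tt 0%nat) = P0 /\ As 0%nat (tt 0%nat) = A0)
  (Hsol : forall k, (k <= n)%nat ->
     solves mu delta rho (Bpar beta0 Db k) (tt k) (Ps k) (As k))
  (Hjump : forall k, (1 <= k <= n)%nat ->
     Ps k (tt k) = Ps (k - 1)%nat (tt k) /\
     As k (tt k) = As (k - 1)%nat (tt k)
                   + Dl k * Cshare (Ps (k - 1)%nat (tt k)) (As (k - 1)%nat (tt k)))
  (Hpos : forall k, (1 <= k <= n)%nat -> 0 < Ps k (tt k)) :
  (forall k, (1 <= k <= n)%nat ->
     (forall j, (1 <= j <= k)%nat -> Bpar beta0 Db j <= mu) ->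
     is_lim (fun t => Cshare (Ps k t) (As k t)) p_infty 1 /\
     (Bpar beta0 Db k < delta ->
        exists L : R,
          filterlim (fun eps => fP mu delta (Bpar beta0 Db k) eps (Dl k) / eps)
                    (at_right 0) (locally L) /\
          (0 < L <-> (mu - Bpar beta0 Db k) / (delta - Bpar beta0 Db k) < Dl k))) /\
  (forall kstar : nat,
     (1 <= kstar <= n)%nat -> mu < Bpar beta0 Db kstar ->
     (forall k, (1 <= k < kstar)%nat -> Bpar beta0 Db k <= mu) ->
     (is_lim (fun t => Cshare (Ps kstar t) (As kstar t)) p_infty
             (mu / Bpar beta0 Db kstar) /\
      mu / Bpar beta0 Db kstar < 1) /\
     (forall k, (kstar < k <= n)%nat ->
        is_lim (fun t => Cshare (Ps k t) (As k t)) p_infty (mu / Bpar beta0 Db k) /\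
        is_lim (fun t => Cshare (Ps (k - 1)%nat t) (As (k - 1)%nat t)) p_infty
               (mu / Bpar beta0 Db (k - 1)) /\
        mu / Bpar beta0 Db k <= mu / Bpar beta0 Db (k - 1) /\
        (mu / Bpar beta0 Db k < mu / Bpar beta0 Db (k - 1) <-> 0 < Db k)) /\
     (mu - beta0 < cumsum Db kstar /\
      forall k, (1 <= k)%nat -> mu - beta0 < cumsum Db k -> (kstar <= k)%nat)).

  assert (Hcs : forall k, (k <= n)%nat -> 0 <= cumsum Db k).
  { intros k Hk. change 0 with (cumsum Db 0). apply (cumsum_mono Db n HDb); lia. }
  assert (HBpos : forall k, (k <= n)%nat -> 0 < Bpar beta0 Db k).
  { intros k Hk. unfold Bpar. specialize (Hcs k Hk). lra. }
  assert (Hseg : forall k, (1 <= k <= n)%nat ->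
     (Bpar beta0 Db k <= mu -> is_lim (fun t => Cshare (Ps k t) (As k t)) p_infty 1) /\
     (mu < Bpar beta0 Db k -> is_lim (fun t => Cshare (Ps k t) (As k t)) p_infty (mu / Bpar beta0 Db k))).
  { intros k Hk. apply (seg mu delta rho _ (tt k)); auto.
    apply HBpos; lia. apply Hsol; lia. }
  split.
  - intros k Hk Hj. split.
    + apply (proj1 (Hseg k Hk)). apply Hj; lia.
    + intros Hbd. set (B := Bpar beta0 Db k) in *.
      exists ((B - mu) + (delta - B) * Dl k). split.
      * apply (proj2 (filterlim_locally _ _)). intros [eps Heps]. simpl.
        assert (Hq : 0 < eps / (2 * Rabs B + 1)).
        { pose proof (Rabs_pos B). apply Rdiv_lt_0_compat; lra. }
        exists (mkposreal _ Hq). intros x Hx Hx0. apply ball_R in Hx. simpl in Hx.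
        apply R_ball. unfold fP.
        replace (x * (B - mu - 2 * B * x + (delta - B) * Dl k) / x - (B - mu + (delta - B) * Dl k))
          with (- (2 * B) * x) by (field; lra).
        rewrite Rabs_mult, Rabs_Ropp, Rabs_mult, (Rabs_pos_eq 2) by lra.
        rewrite Rminus_0_r in Hx. pose proof (Rabs_pos B). pose proof (Rabs_pos x).
        assert (Rabs x * (2 * Rabs B + 1) < eps).
        { apply (Rmult_lt_compat_r (2 * Rabs B + 1)) in Hx; [|lra].
          replace (eps / (2 * Rabs B + 1) * (2 * Rabs B + 1)) with eps in Hx by (field; lra). exact Hx. }
        nra.
      * rewrite Rlt_div_l by lra. split; intro; lra.
  - intros kstar Hks Hgt Hle.
    split; [split|split].
    + apply (proj2 (Hseg kstar Hks)); exact Hgt.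
    + rewrite Rlt_div_l by lra. lra.
    + intros k Hk.
      assert (HBk1 : mu < Bpar beta0 Db (k - 1)).
      { unfold Bpar in *. pose proof (cumsum_mono Db n HDb kstar (k - 1) ltac:(lia) ltac:(lia)). lra. }
      assert (HBk : mu < Bpar beta0 Db k).
      { unfold Bpar in *. pose proof (cumsum_mono Db n HDb kstar k ltac:(lia) ltac:(lia)). lra. }
      split; [apply (proj2 (Hseg k ltac:(lia))); exact HBk|].
      split; [apply (proj2 (Hseg (k - 1)%nat ltac:(lia))); exact HBk1|].
      destruct k as [|k']; [lia|].
      replace (S k' - 1)%nat with k' in * by lia.
      assert (E : Bpar beta0 Db (S k') = Bpar beta0 Db k' + Db (S k')) by (unfold Bpar; simpl; ring).
      rewrite E.
      apply div_cmp; [lra| lra | apply HDb; lia].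
    + split.
      * unfold Bpar in Hgt. lra.
      * intros k Hk1 Hc. assert (hh : (kstar <= k)%nat \/ (k < kstar)%nat) by lia; destruct hh as [h|h]; [exact h|].
        exfalso. specialize (Hle k ltac:(lia)). unfold Bpar in Hle. lra.
Qed.
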